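(* Let $R$ be a ring, $N$ a complex of left $R$-modules and $\{M_n\}_{n\in\mathbb{Z}}$ a family of left $R$-modules. Then $N\in\underline{\mathfrak{Pr}}^{-1}_{\mathscr{C}(R)}\big(\bigoplus_{n\in\mathbb{Z}}\overline{M_n}[n]\big)$ if and only if $N_{n+1}\in\underline{\mathfrak{Pr}}^{-1}_{R\text{-Mod}}(M_n)$ for every $n\in\mathbb{Z}$.
   Context: Complexes are homologically indexed. For a module $M$, $\overline{M}$ is the complex with $M$ in degrees $1$ and $0$, the identity of $M$ as differential $1\to0$, and $0$ elsewhere; for a complex $X$, $X[n]$ is the complex with $X[n]_i=X_{i-n}$ and differential $(-1)^nd^X_{i-n}$ (so $\overline{M}[n]$ has $M$ in degrees $n+1$ and $n$). For objects $M,N$ of an abelian category $\mathscr{A}$ with enough projectives ($R\text{-Mod}$ or the category $\mathscr{C}(R)$ of complexes), $M$ is $N$-subprojective if every morphism $M\to N$ factors through a projective object of $\mathscr{A}$; $\underline{\mathfrak{Pr}}^{-1}_{\mathscr{A}}(M)$ is the class of all $N$ such that $M$ is $N$-subprojective. *)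

(* Defs.v *)
From HB Require Import structures.
From mathcomp Require Import all_boot all_order all_algebra.
From mathcomp Require Import zify.
Set Implicit Arguments. Unset Strict Implicit. Unset Printing Implicit Defensive.
Import Order.TTheory GRing.Theory Num.Theory.
Local Open Scope ring_scope.

Definition lin_map (R : pzRingType) (U V : lmodType R) (f : U -> V) : Prop :=
  forall (a : R) (x y : U), f (a *: x + y) = a *: f x + f y.

Definition mod_projective (R : pzRingType) (P : lmodType R) : Prop :=
  forall (X Y : lmodType R) (g : X -> Y), lin_map g ->
    (forall y, exists x, g x = y) ->
  forall (f : P -> Y), lin_map f ->
    exists h : P -> X, lin_map h /\ forall p, g (h p) = f p.

Definition mod_subprojective (R : pzRingType) (M N : lmodType R) : Prop :=
  forall f : M -> N, lin_map f ->
    exists (P : lmodType R) (a : M -> P) (b : P -> N),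
      [/\ mod_projective P, lin_map a, lin_map b & forall m, f m = b (a m)].

Unset Implicit Arguments.
Record complex (R : pzRingType) := Complex {
  cobj :> int -> lmodType R;
  cd : forall i : int, cobj i -> cobj (i - 1);
  cd_lin : forall i : int, lin_map (cd i);
  cd_dd : forall i (x : cobj i), cd (i - 1) (cd i x) = 0 }.

Record cmor (R : pzRingType) (X Y : complex R) := CMor {
  cmap :> forall i : int, X i -> Y i;
  cmap_lin : forall i : int, lin_map (cmap i);
  cmap_comm : forall i (x : X i), cmap (i - 1) (cd R X i x) = cd R Y i (cmap i x) }.

Arguments cd {R} c i _ : rename.
Arguments cmap {R X Y} c i _ : rename.
Arguments cmor {R} X Y.
Set Implicit Arguments.

Definition cpx_projective (R : pzRingType) (P : complex R) : Prop :=
  forall (X Y : complex R) (g : cmor X Y),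
    (forall i (y : Y i), exists x : X i, g i x = y) ->
  forall f : cmor P Y, exists h : cmor P X, forall i (p : P i), g i (h i p) = f i p.

Definition cpx_subprojective (R : pzRingType) (M N : complex R) : Prop :=
  forall f : cmor M N,
    exists (P : complex R) (a : cmor M P) (b : cmor P N),
      cpx_projective P /\ forall i (m : M i), f i m = b i (a i m).

(* Degree i is M ^ [i = n or i = n+1], i.e. {ffun 'I_1 -> M} (a copy of M)
   in degrees n+1 and n, and {ffun 'I_0 -> M} (the zero module) elsewhere.
   The differential n+1 -> n is (-1)^n id, all other differentials are 0. *)
Definition disc_obj (R : pzRingType) (M : lmodType R) (n : int) (i : int)
  : lmodType R := {ffun 'I_((i == n) || (i == n + 1)) -> M}.

Definition disc_d (R : pzRingType) (M : lmodType R) (n : int) (i : int)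
  (f : disc_obj M n i) : disc_obj M n (i - 1) :=
  [ffun _ => (if i == n + 1 then (-1) ^+ `|n|%N else 0) *: \sum_k f k].

Lemma disc_coef_comm (R : pzRingType) (M : lmodType R) (b : bool) (k : nat)
  (a : R) (v : M) :
  (if b then (-1) ^+ k else 0) *: (a *: v) = a *: ((if b then (-1) ^+ k else 0) *: v).
Proof.
case: b; last by rewrite !scale0r scaler0.
by rewrite -signr_odd !scaler_sign; case: (odd k); rewrite ?scalerN.
Qed.

Lemma disc_d_lin (R : pzRingType) (M : lmodType R) n i : lin_map (@disc_d R M n i).
Proof.
rewrite /disc_obj => a x y; apply/ffunP=> j; rewrite /disc_d !ffunE.
rewrite (eq_bigr (fun k => a *: x k + y k)); last by move=> k _; rewrite !ffunE.
by rewrite big_split /= -scaler_sumr scalerDr disc_coef_comm.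
Qed.

Lemma disc_coef_prod0 (R : pzRingType) (b1 b2 : bool) (k1 k2 : nat) :
  (b2 -> ~~ b1) ->
  (if b1 then (-1) ^+ k1 else 0) * (if b2 then (-1) ^+ k2 else 0) = 0 :> R.
Proof. by case: b1; case: b2; rewrite ?mulr0 ?mul0r // => /(_ isT). Qed.

Lemma disc_d_dd (R : pzRingType) (M : lmodType R) n i (x : disc_obj M n i) :
  disc_d (disc_d x) = 0.
Proof.
move: x; rewrite /disc_obj => x; apply/ffunP=> j; rewrite /disc_d !ffunE.
rewrite (eq_bigr (fun=> (if i == n + 1 then (-1) ^+ `|n|%N else 0) *:
   \sum_k x k)); last by move=> k _; rewrite ffunE.
rewrite sumr_const scalerMnr scalerA disc_coef_prod0 ?scale0r ?mul0rn //.
move=> /eqP ->; apply/negP => /eqP; lia.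
Qed.

Definition disc_shift (R : pzRingType) (M : lmodType R) (n : int) : complex R :=
  @Complex R (disc_obj M n) (@disc_d R M n) (@disc_d_lin R M n) (@disc_d_dd R M n).

Definition is_coproduct (R : pzRingType) (D : int -> complex R) (S : complex R)
  (inj : forall n, cmor (D n) S) : Prop :=
  forall (Y : complex R) (f : forall n, cmor (D n) Y),
    exists g : cmor S Y,
      (forall n i (x : D n i), g i (inj n i x) = f n i x) /\
      (forall g' : cmor S Y, (forall n i (x : D n i), g' i (inj n i x) = f n i x) ->
         forall i (s : S i), g' i s = g i s).
Arguments is_coproduct {R} D S inj.

(* Main.v *)
Require Import Defs.
From HB Require Import structures.
From mathcomp Require Import all_boot all_order all_algebra.
From mathcomp Require Import zify.
From Stdlib Require Import ClassicalEpsilon.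

Import GRing.Theory.
Local Open Scope ring_scope.

Section Aux.
Variable R : pzRingType.

Lemma lin0 {U V : lmodType R} {f : U -> V} : lin_map f -> f 0 = 0.
Proof.
move=> fl; have h := fl 1 0 0; rewrite !scale1r addr0 in h.
by apply: (addrI (f 0)); rewrite -h addr0.
Qed.

Lemma linD {U V : lmodType R} {f : U -> V} : lin_map f -> forall x y, f (x + y) = f x + f y.
Proof. by move=> fl x y; have := fl 1 x y; rewrite !scale1r. Qed.

Lemma linZ {U V : lmodType R} {f : U -> V} : lin_map f -> forall a x, f (a *: x) = a *: f x.
Proof. by move=> fl a x; rewrite -[a *: x]addr0 fl lin0 // addr0. Qed.

Lemma lin_sum {U V : lmodType R} {f : U -> V} : lin_map f ->
  forall n (F : 'I_n -> U), f (\sum_i F i) = \sum_i f (F i).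
Proof.
move=> fl n F; apply: (big_morph f); [exact: linD| exact: lin0].
Qed.

Lemma lin_id (U : lmodType R) : lin_map (fun x : U => x).
Proof. by []. Qed.

Lemma lin_comp {U V W : lmodType R} {f : V -> W} {g : U -> V} :
  lin_map f -> lin_map g -> lin_map (fun x => f (g x)).
Proof. by move=> fl gl a x y; rewrite gl fl. Qed.

Lemma lin_add {U V : lmodType R} {f g : U -> V} :
  lin_map f -> lin_map g -> lin_map (fun x => f x + g x).
Proof. move=> fl gl a x y; rewrite fl gl scalerDr; rewrite -!addrA; congr (_ + _).
rewrite addrCA; congr (_ + _); by rewrite addrC. Qed.

Lemma lin_scale (U V : lmodType R) (c : R) (f : U -> V) (cc : forall a, c * a = a * c) :
  lin_map f -> lin_map (fun x => c *: f x).
Proof. by move=> fl a x y; rewrite fl scalerDr !scalerA cc. Qed.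

Lemma sign_comm k (a : R) : (-1) ^+ k * a = a * (-1) ^+ k.
Proof. by rewrite -signr_odd; case: (odd k); rewrite ?mulN1r ?mulrN1 ?mul1r ?mulr1. Qed.

Lemma sign_sq k : ((-1) ^+ k * (-1) ^+ k : R) = 1.
Proof. by rewrite -signr_odd; case: (odd k); rewrite ?mulN1r ?opprK ?mul1r. Qed.

Lemma signZK (U : lmodType R) k (x : U) : (-1) ^+ k *: ((-1) ^+ k *: x) = x.
Proof. by rewrite scalerA sign_sq scale1r. Qed.

Definition tcast (F : int -> lmodType R) (j k : int) (x : F j) : F k :=
  if j =P k is ReflectT e then eq_rect j F x k e else 0.
Arguments tcast : clear implicits.

Lemma tcast_id (F : int -> lmodType R) j (x : F j) : tcast F j j x = x.
Proof.
rewrite /tcast; case: eqP => // e.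
by rewrite (eq_irrelevance e (erefl j)).
Qed.

Lemma tcast_neq (F : int -> lmodType R) j k (x : F j) : j != k -> tcast F j k x = 0.
Proof. by rewrite /tcast; case: eqP. Qed.

Lemma tcast0 (F : int -> lmodType R) j k : tcast F j k 0 = 0.
Proof. by case: (j =P k) => [<-|/eqP ne]; rewrite ?tcast_id ?tcast_neq. Qed.

Lemma tcast_lin (F : int -> lmodType R) j k : lin_map (tcast F j k).
Proof.
move=> a x y; case: (j =P k) => [e|/eqP ne].
  by subst k; rewrite !tcast_id.
by rewrite !tcast_neq // scaler0 addr0.
Qed.

Lemma tcast_nat (F G : int -> lmodType R) (f : forall j, F j -> G j) :
  (forall j, f j 0 = 0) -> forall j k x, tcast G j k (f j x) = f k (tcast F j k x).
Proof.
move=> f0 j k x; case: (j =P k) => [e|/eqP ne].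
  by subst k; rewrite !tcast_id.
by rewrite !tcast_neq.
Qed.

Lemma tcast_shift (F : int -> lmodType R) (s : int -> int) : injective s ->
  forall j k x, tcast (fun i => F (s i)) j k x = tcast F (s j) (s k) x.
Proof.
move=> si j k x; case: (j =P k) => [e|/eqP ne].
  by subst k; rewrite !tcast_id.
rewrite !tcast_neq //; apply: contra ne => /eqP /si ->; done.
Qed.

Lemma tcastK (F : int -> lmodType R) j k (x : F j) : j = k -> tcast F k j (tcast F j k x) = x.
Proof. by move=> e; subst k; rewrite !tcast_id. Qed.

Lemma tcast_trans (F : int -> lmodType R) j k l (x : F j) : j = k -> tcast F k l (tcast F j k x) = tcast F j l x.
Proof. by move=> e; subst k; rewrite !tcast_id. Qed.

Lemma tcastZ (F : int -> lmodType R) j k a (x : F j) : tcast F j k (a *: x) = a *: tcast F j k x.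
Proof. exact: linZ (tcast_lin F j k) a x. Qed.

Lemma tcastD (F : int -> lmodType R) j k (x y : F j) : tcast F j k (x + y) = tcast F j k x + tcast F j k y.
Proof. exact: linD (tcast_lin F j k) x y. Qed.

Lemma tcast_pair (F G : int -> lmodType R) j k (x : F j) (y : G j) :
  tcast (fun i => (F i * G i)%type) j k (x, y) = (tcast F j k x, tcast G j k y).
Proof.
case: (j =P k) => [e|/eqP ne]; first by subst k; rewrite !tcast_id.
by rewrite !tcast_neq.
Qed.

Lemma ffun_bool (M : lmodType R) (b : bool) (v : {ffun 'I_b -> M}) :
  v = [ffun _ => \sum_j v j].
Proof.
apply/ffunP; case: b v => v j; rewrite ffunE.
  by rewrite big_ord1; case: j => -[|//] ?; congr (v _); apply: val_inj.
by case: j.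
Qed.

Lemma ffun_false (M : lmodType R) (b : bool) (v : {ffun 'I_b -> M}) :
  b = false -> v = 0.
Proof. by move=> e; subst b; apply/ffunP => -[]. Qed.

Lemma sum_const_ffun (M : lmodType R) (b : bool) (y : M) :
  \sum_(j < b) ([ffun _ => y] : {ffun 'I_b -> M}) j = if b then y else 0.
Proof. by case: b; rewrite ?big_ord1 ?big_ord0 ?ffunE. Qed.

Lemma sum_const_true (M : lmodType R) (b : bool) (y : M) : b = true ->
  \sum_(j < b) ([ffun _ => y] : {ffun 'I_b -> M}) j = y.
Proof. by move=> e; subst b; rewrite sum_const_ffun. Qed.

Definition sgm {M : lmodType R} {b : bool} (v : {ffun 'I_b -> M}) : M := \sum_j v j.

Lemma sgm_lin (M : lmodType R) (b : bool) : lin_map (@sgm M b).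
Proof.
move=> a x y; rewrite /sgm scaler_sumr -big_split /=.
by apply: eq_bigr => j _; rewrite !ffunE.
Qed.

Lemma lin_pair {U V W : lmodType R} {f : U -> V} {g : U -> W} :
  lin_map f -> lin_map g -> lin_map (fun x => ((f x, g x) : (V * W)%type)).
Proof. by move=> fl gl a x y; rewrite fl gl. Qed.

Definition eps (n : int) : R := (-1) ^+ `|n|%N.

Lemma sgm_d (M : lmodType R) n i (v : disc_obj M n i) :
  sgm (disc_d v) = (if i == n + 1 then eps n else 0) *: sgm v.
Proof.
rewrite /disc_d /sgm sum_const_ffun /eps; case: (i - 1 =P n) => [e|ne] /=.
  by [].
have -> : (if i == n + 1 then (-1) ^+ `|n| else 0) = 0 :> R.
  by case: eqP => // h; case: ne; rewrite h addrK.
by rewrite !scale0r; case: ifP.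
Qed.

Definition ccomp (X Y Z : complex R) (g : cmor Y Z) (f : cmor X Y) : cmor X Z :=
  @CMor R X Z (fun i x => g i (f i x))
    (fun i => lin_comp (@cmap_lin _ _ _ g i) (@cmap_lin _ _ _ f i))
    (fun i x => etrans (f_equal (g (i - 1)) (@cmap_comm _ _ _ f i x)) (@cmap_comm _ _ _ g i (f i x))).

Lemma tcast_d (X : complex R) j k (x : X j) :
  cd X k (tcast X j k x) = tcast X (j - 1) (k - 1) (cd X j x).
Proof.
rewrite -(@tcast_shift X (fun i => i - 1)); last by move=> a b /addIr.
by rewrite (@tcast_nat X (fun i => X (i - 1)) (cd X)) // => l; apply: lin0; apply: cd_lin.
Qed.

Lemma tcast_cmap (X Y : complex R) (f : cmor X Y) j k (x : X j) :
  f k (tcast X j k x) = tcast Y j k (f j x).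
Proof.
by rewrite (@tcast_nat X Y f) // => l; apply: lin0; apply: cmap_lin.
Qed.


Lemma tcast_ffun (M : lmodType R) m j k (y : M) : j = k ->
  tcast (disc_obj M m) j k [ffun _ => y] = [ffun _ => y].
Proof. by move=> e; subst k; rewrite tcast_id. Qed.

Lemma disc_ext (M : lmodType R) m (Y : complex R) (u w : cmor (disc_shift M m) Y) :
  (forall x, u (m + 1) [ffun _ => x] = w (m + 1) [ffun _ => x]) ->
  forall i v, u i v = w i v.
Proof.
move=> H i v; case: (i =P m + 1) => [e|ne].
  by subst i; rewrite (@ffun_bool _ _ v); apply: H.
case: (i =P m) => [e|ne2].
  subst i.
  pose z : disc_obj M m (m + 1) := [ffun _ => eps m *: sgm v].
  have Ev : v = tcast (disc_shift M m) (m + 1 - 1) m (cd (disc_shift M m) (m + 1) z).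
    rewrite /= /disc_d /z.
    rewrite (@sum_const_true M _ _ (_ : _ = true)); last by rewrite eqxx orbT.
    rewrite (eqxx (m + 1)).
    rewrite /eps signZK tcast_ffun ?addrK //.
    exact: ffun_bool.
  by rewrite Ev !tcast_cmap !cmap_comm /z H.
have Ev : v = 0.
  apply: ffun_false; apply/negP => /orP [] /eqP; [exact: ne2| exact: ne].
by rewrite Ev !lin0 //; apply: cmap_lin.
Qed.


Section Dmap.
Variables (M : lmodType R) (m : int) (Y : complex R) (g : M -> Y (m + 1)).
Hypothesis gl : lin_map g.

Definition dfun i (v : disc_obj M m i) : Y i :=
  tcast Y (m + 1) i (g (sgm v)) +
  tcast Y (m + 1 - 1) i (eps m *: cd Y (m + 1) (g (sgm v))).

Lemma dfun_lin i : lin_map (dfun i).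
Proof.
apply: lin_add; first exact: lin_comp (tcast_lin _ _ _) (lin_comp gl (@sgm_lin _ _)).
apply: lin_comp (tcast_lin _ _ _) _.
apply: lin_scale; first exact: sign_comm.
exact: lin_comp (cd_lin _ _ _) (lin_comp gl (@sgm_lin _ _)).
Qed.

Lemma dfun_comm i (v : disc_obj M m i) :
  dfun (i - 1) (disc_d v) = cd Y i (dfun i v).
Proof.
rewrite /dfun sgm_d.
have [e|ne] : i = m + 1 \/ i <> m + 1 by case: (i =P m + 1); auto.
  subst i.
  have -> : (if m + 1 == m + 1 then eps m else 0) = eps m by rewrite eqxx.
  rewrite (tcast_neq _ _ _ _ (_ : m + 1 != m + 1 - 1)); last by apply/eqP; lia.
  rewrite (tcast_neq _ _ _ _ (_ : m + 1 - 1 != m + 1)); last by apply/eqP; lia.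
  rewrite !tcast_id add0r addr0 (linZ gl) (linZ (cd_lin _ _ _)).
  by rewrite /eps signZK.
have -> : (if i == m + 1 then eps m else 0) = 0 by case: eqP.
rewrite scale0r (lin0 gl) (lin0 (cd_lin _ _ _)) scaler0 !tcast0 addr0.
rewrite (tcast_neq _ _ _ _ (_ : m + 1 != i)); last by apply/eqP => h; apply: ne.
rewrite add0r tcast_d (linZ (cd_lin _ _ _)) cd_dd scaler0 tcast0 //.
Qed.

Definition dmap : cmor (disc_shift M m) Y :=
  @CMor R (disc_shift M m) Y dfun dfun_lin dfun_comm.

Lemma dmap_top x : dmap (m + 1) [ffun _ => x] = g x.
Proof.
rewrite /= /dfun tcast_id (tcast_neq _ _ _ _ (_ : m + 1 - 1 != m + 1)); last by apply/eqP; lia.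
by rewrite addr0 /sgm sum_const_true // eqxx orbT.
Qed.

End Dmap.


Section ProjComp.
Variables (P : complex R) (k : int).

Definition Gfun {X Y : lmodType R} (g : X -> Y) i (v : disc_obj X k i) : disc_obj Y k i :=
  [ffun j => g (v j)].

Lemma Gfun_lin {X Y : lmodType R} (g : X -> Y) (gl : lin_map g) i : lin_map (Gfun g i).
Proof. by move=> a x y; apply/ffunP => j; rewrite !ffunE gl. Qed.

Lemma Gfun_comm {X Y : lmodType R} (g : X -> Y) (gl : lin_map g) i (v : disc_obj X k i) :
  Gfun g (i - 1) (disc_d v) = disc_d (Gfun g i v).
Proof.
apply/ffunP => j; rewrite /Gfun /disc_d !ffunE (linZ gl) (lin_sum gl).
by congr (_ *: _); apply: eq_bigr => l _; rewrite ffunE.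
Qed.

Definition Hfun {Y : lmodType R} (h : P k -> Y) i (p : P i) : disc_obj Y k i :=
  [ffun _ => if i == k then h (tcast P i k p)
             else if i == k + 1 then eps k *: h (tcast P (i - 1) k (cd P i p)) else 0].

Lemma Hfun_lin {Y : lmodType R} (h : P k -> Y) (hl : lin_map h) i : lin_map (Hfun h i).
Proof.
move=> a x y; apply/ffunP => j; rewrite /Hfun !ffunE.
case: ifP => _; first by rewrite tcast_lin hl.
case: ifP => _; last by rewrite scaler0 addr0.
by rewrite cd_lin tcast_lin hl scalerDr !scalerA sign_comm.
Qed.

Lemma Hfun_comm {Y : lmodType R} (h : P k -> Y) (hl : lin_map h) i (p : P i) :
  Hfun h (i - 1) (cd P i p) = disc_d (Hfun h i p).
Proof.
apply/ffunP => j; rewrite /Hfun /disc_d !ffunE sum_const_ffun.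
have [e|ne] : i = k + 1 \/ i <> k + 1 by case: (i =P k + 1); auto.
  subst i.
  have -> : (k + 1 - 1 == k) = true by rewrite addrK eqxx.
  have -> : (k + 1 == k) = false by apply/eqP; lia.
  rewrite eqxx orbT.
  by rewrite /eps signZK.
have -> : (i == k + 1) = false by apply/eqP.
have -> : (i - 1 == k) = false by apply/eqP => h1; apply: ne; rewrite -h1 subrK.
rewrite scale0r; case: ifP => _ //.
by rewrite cd_dd tcast0 (lin0 hl) scaler0.
Qed.

Lemma proj_comp : cpx_projective P -> mod_projective (P k).
Proof.
move=> PP X Y g gl gs h hl.
pose G := @CMor R (disc_shift X k) (disc_shift Y k) (@Gfun X Y g) (@Gfun_lin X Y g gl)
  (@Gfun_comm X Y g gl).
pose H := @CMor R P (disc_shift Y k) (@Hfun Y h) (@Hfun_lin Y h hl) (@Hfun_comm Y h hl).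
have Gs : forall i (y : disc_shift Y k i), exists x, G i x = y.
  move=> i y; have [x gx] := gs (sgm y).
  exists ([ffun _ => x] : disc_obj X k i).
  rewrite /= /Gfun; rewrite [RHS](@ffun_bool _ _ y); apply/ffunP => j; rewrite !ffunE.
  by rewrite gx.
have [L HL] := PP _ _ G Gs H.
exists (fun p => sgm (L k p)); split.
  move=> a x y; rewrite cmap_lin; exact: sgm_lin.
move=> p; rewrite /sgm (lin_sum gl).
have := HL k p; rewrite /= /Gfun /Hfun => E.
have := congr1 (fun v : disc_obj Y k k => \sum_j v j) E => /=.
rewrite sum_const_true ?eqxx // tcast_id.
rewrite [X in _ = X -> _](_ : _ = h p); last by rewrite eqxx.
move=> <-.
by apply: eq_bigr => j _; rewrite ffunE.
Qed.

End ProjComp.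


Lemma pairZ (U V : lmodType R) a (x : U) (y : V) : a *: ((x, y) : (U * V)%type) = (a *: x, a *: y).
Proof. by []. Qed.
Lemma pairD (U V : lmodType R) (x x' : U) (y y' : V) : ((x, y) : (U * V)%type) + (x', y') = (x + x', y + y').
Proof. by []. Qed.
Lemma pair0 (U V : lmodType R) : (0 : (U * V)%type) = (0, 0).
Proof. by []. Qed.

Lemma lin_fst (U V : lmodType R) : lin_map (fun p : (U * V)%type => p.1).
Proof. by move=> a [? ?] [? ?]. Qed.
Lemma lin_snd (U V : lmodType R) : lin_map (fun p : (U * V)%type => p.2).
Proof. by move=> a [? ?] [? ?]. Qed.

Section PCpx.
Variable Q : int -> lmodType R.

Definition Pobj (i : int) : lmodType R := (Q (i - 1) * Q i)%type.

Definition Pd i (p : Pobj i) : Pobj (i - 1) := (0, eps (i - 1) *: p.1).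

Lemma Pd_lin i : lin_map (Pd i).
Proof.
move=> a [x1 x2] [y1 y2]; rewrite /Pd /= pairZ pairD.
by rewrite scaler0 addr0 scalerDr !scalerA sign_comm.
Qed.

Lemma Pd_dd i (p : Pobj i) : Pd (i - 1) (Pd i p) = 0 :> Pobj (i - 1 - 1).
Proof. by rewrite /Pd /= pair0; congr (_, _); apply: scaler0. Qed.

Definition Pcpx : complex R := @Complex R Pobj Pd Pd_lin Pd_dd.

Lemma Pcpx_proj : (forall n, mod_projective (Q n)) -> cpx_projective Pcpx.
Proof.
move=> hQ X Y g gs f.
have fl i := cmap_lin _ _ _ f i.
have gl i := cmap_lin _ _ _ g i.
have H : forall i, exists psi : Q (i - 1) -> X i,
    lin_map psi /\ forall x, g i (psi x) = f i ((x, 0) : Pobj i).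
  move=> i; apply: (hQ (i - 1) (X i) (Y i) (g i) (gl i) (gs i)).
  by move=> a x y; rewrite -(fl i) pairZ pairD scaler0 addr0.
pose psi i := proj1_sig (constructive_indefinite_description _ (H i)).
have psiP i : lin_map (psi i) /\ forall x, g i (psi i x) = f i ((x, 0) : Pobj i).
  exact: (proj2_sig (constructive_indefinite_description _ (H i))).
pose hf i (p : Pcpx i) : X i := psi i p.1 +
  tcast X (i + 1 - 1) i (eps i *: cd X (i + 1) (psi (i + 1) (tcast Q i (i + 1 - 1) p.2))).
have hlin i : lin_map (hf i).
  apply: lin_add; first exact: lin_comp (proj1 (psiP i)) (lin_fst _ _).
  apply: lin_comp (tcast_lin _ _ _) _; apply: lin_scale; first exact: sign_comm.
  apply: lin_comp (cd_lin _ _ _) _; apply: lin_comp (proj1 (psiP (i + 1))) _.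
  exact: lin_comp (tcast_lin _ _ _) (lin_snd _ _).
have hcomm i (p : Pcpx i) : hf (i - 1) (cd Pcpx i p) = cd X i (hf i p).
  have key : forall j k (x : Q (j - 1)), k = j ->
      tcast X (k - 1) (j - 1) (cd X k (psi k (tcast Q (j - 1) (k - 1) x))) = cd X j (psi j x).
    by move=> j k x e; subst k; rewrite !tcast_id.
  rewrite /hf /= (lin0 (proj1 (psiP _))) add0r !tcastZ (linZ (proj1 (psiP _))).
  rewrite (linZ (cd_lin _ _ _)) tcastZ scalerA /eps sign_sq scale1r.
  rewrite (key i (i - 1 + 1)) ?subrK //.
  by rewrite (linD (cd_lin _ _ _)) (linZ (cd_lin _ _ _)) tcast_d cd_dd tcast0 scaler0 addr0.
exists (@CMor R Pcpx X hf hlin hcomm) => i p /=.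
have key2 : forall l (y : Q i), l = i ->
    tcast Y l i (eps i *: f l ((0, eps l *: tcast Q i l y) : Pobj l)) = f i ((0, y) : Pobj i).
  move=> l y e; subst l; rewrite !tcast_id.
  have -> : ((0, eps i *: y) : Pobj i) = eps i *: ((0, y) : Pobj i) by rewrite pairZ scaler0.
  by rewrite (linZ (fl i)) scalerA /eps sign_sq scale1r.
rewrite /hf (linD (gl i)) (proj2 (psiP i)) tcast_cmap (linZ (gl _)) cmap_comm.
rewrite (proj2 (psiP (i + 1))) -(cmap_comm _ _ _ f) /=.
rewrite key2 ?addrK // -(linD (fl i)) pairD addr0 add0r.
by case: p.
Qed.

End PCpx.


Section Maps.
Variables (Q M : int -> lmodType R) (N : complex R).
Variables (a : forall n, M n -> Q n) (b : forall n, Q n -> N (n + 1)).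
Hypotheses (al : forall n, lin_map (a n)) (bl : forall n, lin_map (b n)).

Definition afun n i (v : disc_obj (M n) n i) : Pobj Q i :=
  (tcast Q n (i - 1) (a n (sgm v)), tcast Q n i (a n (sgm v))).

Lemma afun_lin n i : lin_map (afun n i).
Proof.
apply: lin_pair.
  exact: lin_comp (tcast_lin _ _ _) (lin_comp (al n) (@sgm_lin _ _)).
exact: lin_comp (tcast_lin _ _ _) (lin_comp (al n) (@sgm_lin _ _)).
Qed.

Lemma afun_comm n i (v : disc_obj (M n) n i) :
  afun n (i - 1) (disc_d v) = Pd Q i (afun n i v).
Proof.
rewrite /afun /Pd /= sgm_d.
have [e|ne] : i = n + 1 \/ i <> n + 1 by case: (i =P n + 1); auto.
  subst i.
  have -> : (if n + 1 == n + 1 then eps n else 0) = eps n by rewrite eqxx.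
  rewrite (tcast_neq _ _ _ _ (_ : n != n + 1 - 1 - 1)); last by apply/eqP; lia.
  rewrite (linZ (al n)) tcastZ.
  by have -> : eps (n + 1 - 1) = eps n by rewrite addrK.
have -> : (if i == n + 1 then eps n else 0) = 0 by case: eqP.
rewrite scale0r (lin0 (al n)) !tcast0.
by rewrite (tcast_neq _ _ _ _ (_ : n != i - 1)) ?scaler0 //; apply/eqP => h; apply: ne; rewrite h subrK.
Qed.

Definition alpha n : cmor (disc_shift (M n) n) (Pcpx Q) :=
  @CMor R (disc_shift (M n) n) (Pcpx Q) (afun n) (afun_lin n) (afun_comm n).

Definition bfun i (p : Pobj Q i) : N i :=
  tcast N (i - 1 + 1) i (b (i - 1) p.1) +
  tcast N (i + 1 - 1) i (eps i *: cd N (i + 1) (b i p.2)).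

Lemma bfun_lin i : lin_map (bfun i).
Proof.
apply: lin_add; first exact: lin_comp (tcast_lin _ _ _) (lin_comp (bl _) (lin_fst _ _)).
apply: lin_comp (tcast_lin _ _ _) _; apply: lin_scale; first exact: sign_comm.
apply: lin_comp (cd_lin _ _ _) _.
exact: lin_comp (bl _) (lin_snd _ _).
Qed.

Lemma bfun_comm i (p : Pobj Q i) : bfun (i - 1) (Pd Q i p) = cd N i (bfun i p).
Proof.
rewrite /bfun /Pd /= (lin0 (bl _)) tcast0 add0r (linZ (bl _)) (linZ (cd_lin _ _ _)).
rewrite scalerA /eps sign_sq scale1r.
by rewrite (linD (cd_lin _ _ _)) !tcast_d (linZ (cd_lin _ _ _)) cd_dd scaler0 tcast0 addr0.
Qed.

Definition Bmap : cmor (Pcpx Q) N := @CMor R (Pcpx Q) N bfun bfun_lin bfun_comm.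

Lemma BA_top n x : Bmap (n + 1) (alpha n (n + 1) [ffun _ => x]) = b n (a n x).
Proof.
rewrite /= /afun /bfun /=.
rewrite /sgm sum_const_true; last by rewrite eqxx orbT.
rewrite (tcast_neq _ _ _ _ (_ : n != n + 1)); last by apply/eqP; lia.
rewrite (lin0 (bl _)) (lin0 (cd_lin _ _ _)) scaler0 tcast0 addr0.
have key : forall l y, l = n -> tcast N (l + 1) (n + 1) (b l (tcast Q n l y)) = b n y.
  by move=> l y e; subst l; rewrite !tcast_id.
by rewrite key // addrK.
Qed.

End Maps.

End Aux.

Theorem proposition2p4 (R : pzRingType) (N : complex R) (M : int -> lmodType R)
    (S : complex R) (inj : forall n : int, cmor (disc_shift (M n) n) S) :
  is_coproduct (fun n : int => disc_shift (M n) n) S inj ->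
  (cpx_subprojective S N <->
   forall n : int, mod_subprojective (M n) (N (n + 1))).
Proof.
move=> coP; split.
  move=> SP n f fl.
  have gl m : lin_map (fun x : M m => tcast R N (n + 1) (m + 1) (f (tcast R M m n x))).
    exact: lin_comp _ (tcast_lin _ _ _ _) (lin_comp _ fl (tcast_lin _ _ _ _)).
  pose F m := @dmap _ _ _ _ _ (gl m).
  have [phi [Hphi _]] := coP N F.
  have [P [A [B [PP HAB]]]] := SP phi.
  have cl : lin_map (fun x : M n => ([ffun _ => x] : disc_obj (M n) n (n + 1))).
    by move=> c x y; apply/ffunP => j; rewrite !ffunE.
  exists (P (n + 1)), (fun x => A (n + 1) (inj n (n + 1) [ffun _ => x])), (B (n + 1)).
  split.
  - exact: (@proj_comp _ P (n + 1) PP).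
  - by move=> c x y /=; rewrite cl !cmap_lin.
  - exact: cmap_lin.
  - move=> x; rewrite -HAB Hphi /F dmap_top.
    by rewrite !tcast_id.
move=> HM f.
pose g n (x : M n) : N (n + 1) := f (n + 1) (inj n (n + 1) [ffun _ => x]).
have gl n : lin_map (g n).
  move=> c x y; rewrite /g -!(cmap_lin _ _ _ _ _); congr (f _ (inj n _ _)).
  by apply/ffunP => j; rewrite !ffunE.
have Hc : forall n, {PQ : {P : lmodType R & ((M n -> P) * (P -> N (n + 1)%R))%type} |
   [/\ mod_projective (projT1 PQ), lin_map (projT2 PQ).1, lin_map (projT2 PQ).2 &
       forall m, g n m = (projT2 PQ).2 ((projT2 PQ).1 m)]}.
  move=> n; apply: constructive_indefinite_description.
  have [P [a [b [H1 H2 H3 H4]]]] := HM n (g n) (gl n).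
  by exists (existT _ P (a, b)).
pose Q n := projT1 (sval (Hc n)).
pose a n : M n -> Q n := (projT2 (sval (Hc n))).1.
pose b n : Q n -> N (n + 1) := (projT2 (sval (Hc n))).2.
have Qp n : mod_projective (Q n) by case: (svalP (Hc n)).
have al n : lin_map (a n) by case: (svalP (Hc n)).
have bl n : lin_map (b n) by case: (svalP (Hc n)).
have gab n m : g n m = b n (a n m) by case: (svalP (Hc n)).
have [A [HA _]] := coP (Pcpx _ Q) (@alpha _ _ _ _ al).
exists (Pcpx _ Q), A, (@Bmap _ _ N _ bl); split; first exact: (@Pcpx_proj _ Q Qp).
have [phi [_ Huniq]] := coP N (fun n => @ccomp _ _ _ _ f (inj n)).
move=> i s; transitivity (phi i s); first by apply: Huniq.
symmetry; apply: (Huniq (@ccomp _ _ _ _ (@Bmap _ _ N _ bl) A)) => n j x /=.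
rewrite HA.
apply: (@disc_ext R (M n) n N (@ccomp _ _ _ _ (@Bmap _ _ N _ bl) (@alpha _ _ _ _ al n)) (@ccomp _ _ _ _ f (inj n))) => y /=.
have := @BA_top _ _ _ N _ _ al bl n y => /= ->.
by rewrite -gab.
Qed.
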